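(* Let $M$ be a transitive monoid of binary relations on a finite nonempty set $Q$. Then the set $K$ of elements of $M$ of rank $r(M)$ is a regular $\mathcal D$-class of $M$. The groups $G_e$, for $e$ an idempotent in $K$, are equivalent transitive permutation groups. Moreover, for an idempotent $e\in K$ and a fixed point $i$ of $e$, $r(M)$ equals the index in $H(e)$ of the subgroup $\{m\in H(e)\mid (i,i)\in m\}$.
   Context: Monoid of relations: set of relations on $Q$ containing the identity and closed under composition $mn=\{(p,q)\mid\exists r,(p,r)\in m,(r,q)\in n\}$. It is transitive if for all $p,q\in Q$ some $m\in M$ has $(p,q)\in m$. The rank of a relation $m$ on $Q$ is the least cardinality of a set $R$ such that $m=uv$ with $u\subseteq Q\times R$, $v\subseteq R\times Q$ (Boolean rank). The minimal rank $r(M)$ is the minimum rank of the nonempty elements of $M$. A $\mathcal D$-class is regular if it contains an idempotent. For an idempotent $e$, $H(e)$ is its $\mathcal H$-class (a group, inverses $m^{-1}$), $\Gamma_e$ the set of strongly connected components of the restriction of $e$ to its fixed points $\{q\mid (q,q)\in e\}$, $\gamma_e(m)=\{(\rho,\sigma)\in\Gamma_e^2\mid (r,s)\in m,(s,r)\in m^{-1}\text{ for some }r\in\rho,s\in\sigma\}$ for $m\in H(e)$, and $G_e=\gamma_e(H(e))$, a permutation group on $\Gamma_e$. Permutation groups $G$ on $S$ and $G'$ on $S'$ are equivalent if there exist a bijection $\theta:S\to S'$ and an isomorphism $\alpha:G\to G'$ with $\theta(g(s))=\alpha(g)(\theta(s))$. *)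

(* Defs.v *)
From mathcomp Require Import all_boot.
Set Implicit Arguments. Unset Strict Implicit. Unset Printing Implicit Defensive.

Definition relc {A B C : finType} (u : {set A * B}) (v : {set B * C})
  : {set A * C} :=
  [set p | [exists b : B, ((p.1, b) \in u) && ((b, p.2) \in v)]].

Definition idrel (Q : finType) : {set Q * Q} := [set p | p.1 == p.2].

Definition is_rel_monoid (Q : finType) (M : {set {set Q * Q}}) : Prop :=
  idrel Q \in M /\ (forall m n, m \in M -> n \in M -> relc m n \in M).

Definition transitive_relmon (Q : finType) (M : {set {set Q * Q}}) : Prop :=
  forall p q : Q, exists2 m, m \in M & (p, q) \in m.

(* Boolean rank: rank m <= k iff m = uv with u ⊆ Q x R, v ⊆ R x Q, |R| = k
   (only the cardinality of R matters, so R = 'I_k). *)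
Definition rank_le (Q : finType) (m : {set Q * Q}) (k : nat) : bool :=
  [exists u : {set Q * 'I_k}, [exists v : {set 'I_k * Q}, m == relc u v]].

Lemma rank_le_exists (Q : finType) (m : {set Q * Q}) : exists k, rank_le m k.
Proof.
exists #|Q|; apply/existsP.
exists [set p : Q * 'I_#|Q| | [exists y, (enum_rank y == p.2) && ((p.1, y) \in m)]].
apply/existsP; exists [set p : 'I_#|Q| * Q | enum_rank p.2 == p.1].
apply/eqP/setP => [[x y]]; rewrite !inE /=; apply/idP/existsP.
  by move=> Hxy; exists (enum_rank y); rewrite !inE eqxx andbT; apply/existsP; exists y; rewrite eqxx.
move=> [b]; rewrite !inE /= => /andP[/existsP[z /andP[/eqP Hz Hxz]] /eqP Hy].
by move: Hy; rewrite -Hz => /enum_rank_inj ->.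
Qed.

Definition rank (Q : finType) (m : {set Q * Q}) : nat :=
  ex_minn (rank_le_exists m).

(* minimal rank r(M): minimum rank of the nonempty elements of M
   (the default value #|Q| is irrelevant when M has a nonempty element,
   e.g. when M is transitive and Q nonempty) *)
Definition minrank (Q : finType) (M : {set {set Q * Q}}) : nat :=
  \big[minn/#|Q|]_(m in M | m != set0) rank m.

Definition Kset (Q : finType) (M : {set {set Q * Q}}) : {set {set Q * Q}} :=
  [set m in M | rank m == minrank M].

(* Green's relations in M (M contains 1, so M^1 = M) *)
Definition Rrel (Q : finType) (M : {set {set Q * Q}}) (m n : {set Q * Q}) : bool :=
  [exists a in M, [exists b in M, (m == relc n a) && (n == relc m b)]].
Definition Lrel (Q : finType) (M : {set {set Q * Q}}) (m n : {set Q * Q}) : bool :=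
  [exists a in M, [exists b in M, (m == relc a n) && (n == relc b m)]].
Definition Drel (Q : finType) (M : {set {set Q * Q}}) (m n : {set Q * Q}) : bool :=
  [exists p in M, Lrel M m p && Rrel M p n].

Definition is_Dclass (Q : finType) (M K : {set {set Q * Q}}) : Prop :=
  exists2 m, m \in M & K = [set n in M | Drel M m n].

Definition idem_rel (Q : finType) (e : {set Q * Q}) : bool := relc e e == e.

Definition regular_Dclass (Q : finType) (M K : {set {set Q * Q}}) : Prop :=
  is_Dclass M K /\ exists2 e, e \in K & idem_rel e.

Definition Hclass (Q : finType) (M : {set {set Q * Q}}) (e : {set Q * Q})
  : {set {set Q * Q}} := [set m in M | Rrel M m e && Lrel M m e].

Definition hinv (Q : finType) (M : {set {set Q * Q}}) (e m : {set Q * Q})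
  : {set Q * Q} :=
  odflt e [pick n in Hclass M e | (relc m n == e) && (relc n m == e)].

Definition fixpts (Q : finType) (e : {set Q * Q}) : {set Q} := [set q | (q, q) \in e].

Definition resrel (Q : finType) (e : {set Q * Q}) : rel Q :=
  fun p q => [&& p \in fixpts e, q \in fixpts e & (p, q) \in e].

Definition scc (Q : finType) (e : {set Q * Q}) (p : Q) : {set Q} :=
  [set q in fixpts e | connect (resrel e) p q && connect (resrel e) q p].

Definition Gamma (Q : finType) (e : {set Q * Q}) : {set {set Q}} :=
  [set scc e p | p in fixpts e].

Definition gamma (Q : finType) (M : {set {set Q * Q}}) (e m : {set Q * Q})
  : {set {set Q} * {set Q}} :=
  [set x | [&& x.1 \in Gamma e, x.2 \in Gamma e &
     [exists r in x.1, [exists s in x.2,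
        ((r, s) \in m) && ((s, r) \in hinv M e m)]]]].

Definition Gset (Q : finType) (M : {set {set Q * Q}}) (e : {set Q * Q})
  : {set {set {set Q} * {set Q}}} := [set gamma M e m | m in Hclass M e].

(* permutation groups, whose elements are given as relations (graphs) on S *)
Definition is_perm_rel (T : finType) (S : {set T}) (g : {set T * T}) : Prop :=
  [/\ forall x, x \in g -> x.1 \in S /\ x.2 \in S,
      forall s, s \in S -> exists! t, (s, t) \in g
    & forall t, t \in S -> exists! s, (s, t) \in g].

Definition perm_group (T : finType) (S : {set T}) (G : {set {set T * T}}) : Prop :=
  [/\ forall g, g \in G -> is_perm_rel S g,
      [set x | (x.1 \in S) && (x.1 == x.2)] \in G
    & forall g h, g \in G -> h \in G -> relc g h \in G].

Definition transitive_pgroup (T : finType) (S : {set T}) (G : {set {set T * T}}) : Prop :=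
  forall s t, s \in S -> t \in S -> exists2 g, g \in G & (s, t) \in g.

Definition equiv_pgroups (T T' : finType) (S : {set T}) (G : {set {set T * T}})
  (S' : {set T'}) (G' : {set {set T' * T'}}) : Prop :=
  exists (theta : T -> T') (alpha : {set T * T} -> {set T' * T'}),
  [/\ {in S &, injective theta}, theta @: S = S',
      {in G &, injective alpha} /\ alpha @: G = G',
      {in G &, forall g h, alpha (relc g h) = relc (alpha g) (alpha h)}
    & forall g s t, g \in G -> s \in S -> t \in S ->
        ((s, t) \in g) = ((theta s, theta t) \in alpha g)].

Definition index_in (Q : finType) (H S : {set {set Q * Q}}) : nat :=
  #|[set [set relc m s | s in S] | m in H]|.

(* Main.v *)
Require Import Defs.
From mathcomp Require Import all_boot.
From Stdlib Require Import Lia.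
From mathcomp Require Import zify.
Set Implicit Arguments. Unset Strict Implicit. Unset Printing Implicit Defensive.

Lemma relcP (A B C : finType) (u : {set A * B}) (v : {set B * C}) a c :
  reflect (exists b, (a, b) \in u /\ (b, c) \in v) ((a, c) \in relc u v).
Proof.
rewrite inE /=; apply: (iffP existsP) => [[b /andP[H1 H2]]|[b [H1 H2]]].
  by exists b.
by exists b; rewrite H1 H2.
Qed.

Lemma relcA (A B C D : finType) (u : {set A * B}) (v : {set B * C}) (w : {set C * D}) :
  relc (relc u v) w = relc u (relc v w).
Proof.
apply/setP => [[a d]]; apply/relcP/relcP.
  move=> [c [/relcP[b [H1 H2]] H3]]; exists b; split => //; apply/relcP; by exists c.
move=> [b [H1 /relcP[c [H2 H3]]]]; exists c; split => //; apply/relcP; by exists b.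
Qed.

Lemma relc1m (Q : finType) (m : {set Q * Q}) : relc (idrel Q) m = m.
Proof.
apply/setP => [[a d]]; apply/relcP/idP.
  by move=> [b []]; rewrite inE /= => /eqP ->.
by move=> H; exists a; rewrite inE eqxx.
Qed.

Lemma relcm1 (Q : finType) (m : {set Q * Q}) : relc m (idrel Q) = m.
Proof.
apply/setP => [[a d]]; apply/relcP/idP.
  by move=> [b []] H; rewrite inE /= => /eqP <-.
by move=> H; exists d; rewrite inE eqxx.
Qed.

Lemma relcS (A B C : finType) (u u' : {set A * B}) (v v' : {set B * C}) :
  u \subset u' -> v \subset v' -> relc u v \subset relc u' v'.
Proof.
move=> /subsetP Hu /subsetP Hv; apply/subsetP => [[a c]] /relcP[b [H1 H2]].
apply/relcP; exists b; split; [exact: Hu | exact: Hv].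
Qed.

Definition pw (Q : finType) (m : {set Q * Q}) k := iter k (relc m) (idrel Q).

Lemma pwS (Q : finType) (m : {set Q * Q}) k : pw m k.+1 = relc m (pw m k).
Proof. by []. Qed.

Lemma pwD (Q : finType) (m : {set Q * Q}) i j : pw m (i + j) = relc (pw m i) (pw m j).
Proof.
elim: i => [|i IH]; first by rewrite add0n /= relc1m.
by rewrite addSn !pwS IH relcA.
Qed.

Lemma pwSr (Q : finType) (m : {set Q * Q}) k : pw m k.+1 = relc (pw m k) m.
Proof. by rewrite -addn1 pwD /= relcm1. Qed.

Lemma pwM (Q : finType) (m : {set Q * Q}) i j : pw m (i * j) = pw (pw m i) j.
Proof.
elim: j => [|j IH]; first by rewrite muln0.
by rewrite mulnS pwD IH pwS.
Qed.

Lemma pw_idem (Q : finType) (m : {set Q * Q}) :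
  exists2 k, 0 < k & relc (pw m k) (pw m k) = pw m k.
Proof.
pose f (i : 'I_#|{set Q * Q}|.+1) := pw m i.+1.
have : ~~ injectiveb f.
  apply/negP => /injectiveP Hi; have := leq_card _ Hi.
  by rewrite card_ord ltnn.
move/injectivePn => [i [j Hij Hf]].
wlog lt_ij : i j Hij Hf / i < j.
  move=> W; case: (ltngtP i j) => H; [exact: W H| |].
    by apply: (W j i) => //; rewrite eq_sym.
  by move/val_inj: H => H; rewrite H eqxx in Hij.
rewrite /f in Hf.
set p := j - i.
have Hp : 0 < p by rewrite subn_gt0.
have per : forall a t, i < a -> pw m (a + t * p) = pw m a.
  move=> a t Ha; elim: t => [|t IH]; first by rewrite mul0n addn0.
  have -> : a + t.+1 * p = (a - i.+1) + (j.+1 + t * p).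
    rewrite mulSn /p; move: Ha lt_ij; lia.
  rewrite pwD pwD -Hf -pwD -pwD.
  have -> : a - i.+1 + (i.+1 + t * p) = a + t * p by move: Ha; lia.
  exact: IH.
exists ((i.+1) * p); first by rewrite muln_gt0.
rewrite -pwD per //; nia.
Qed.


Lemma rank_min (Q : finType) (m : {set Q * Q}) k : rank_le m k -> rank m <= k.
Proof. rewrite /rank; case: ex_minnP => n _ H; exact: H. Qed.

Lemma rank_wit (Q : finType) (m : {set Q * Q}) : rank_le m (rank m).
Proof. rewrite /rank; by case: ex_minnP. Qed.

Lemma rank_cover (Q I : finType) (u : {set Q * I}) (v : {set I * Q}) (J : {set I}) :
  (forall p i, (p, i) \in u -> i \in J) -> rank (relc u v) <= #|J|.
Proof.
move=> HJ; apply: rank_min; apply/existsP.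
exists [set x : Q * 'I_#|J| | (x.1, enum_val x.2) \in u]; apply/existsP.
exists [set x : 'I_#|J| * Q | (enum_val x.1, x.2) \in v].
apply/eqP/setP => [[p q]]; apply/relcP/relcP.
  move=> [i [H1 H2]]; have Hi := HJ _ _ H1.
  exists (enum_rank_in Hi i); rewrite !inE /= enum_rankK_in //; by split.
move=> [k]; rewrite !inE /= => -[H1 H2]; by exists (enum_val k).
Qed.

Lemma rank_relc_l (Q : finType) (a b : {set Q * Q}) : rank (relc a b) <= rank a.
Proof.
apply: rank_min; move: (rank_wit a) => /existsP[u /existsP[v /eqP Ha]].
apply/existsP; exists u; apply/existsP; exists (relc v b).
by apply/eqP; rewrite -relcA -Ha.
Qed.

Lemma rank_relc_r (Q : finType) (a b : {set Q * Q}) : rank (relc a b) <= rank b.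
Proof.
apply: rank_min; move: (rank_wit b) => /existsP[u /existsP[v /eqP Hb]].
apply/existsP; exists (relc a u); apply/existsP; exists v.
by apply/eqP; rewrite relcA -Hb.
Qed.

Lemma rank0 (Q : finType) (m : {set Q * Q}) : rank m = 0 -> m = set0.
Proof.
move=> H; move: (rank_wit m); rewrite H => /existsP[u /existsP[v /eqP ->]].
apply/setP => [[p q]]; rewrite in_set0; apply/relcP => -[[i Hi]]; by [].
Qed.

Lemma rank_fool (Q I : finType) (m : {set Q * Q}) (B : {set I}) (ps qs : I -> Q) :
  (forall i, i \in B -> (ps i, qs i) \in m) ->
  (forall i j, i \in B -> j \in B -> (ps i, qs j) \in m -> (ps j, qs i) \in m -> i = j) ->
  #|B| <= rank m.
Proof.
move=> H1 H2; move: (rank_wit m); move: (rank m) => k /existsP[u /existsP[v /eqP Hm]].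
have Hex : forall i, i \in B -> exists b, ((ps i, b) \in u) && ((b, qs i) \in v).
  move=> i /H1; rewrite Hm => /relcP[b [Hb1 Hb2]]; exists b; by rewrite Hb1 Hb2.
pose h i := [pick b | ((ps i, b) \in u) && ((b, qs i) \in v)].
have hP : forall i, i \in B -> exists b, h i = Some b /\ (ps i, b) \in u /\ (b, qs i) \in v.
  move=> i Hi; rewrite /h; case: pickP => [b /andP[Hb1 Hb2]|Hn]; first by exists b.
  by case: (Hex i Hi) => b; rewrite Hn.
have inj : {in B &, injective h}.
  move=> i j Hi Hj Hh; case: (hP i Hi) => b [Eb [Ub Vb]]; case: (hP j Hj) => c [Ec [Uc Vc]].
  move: Hh; rewrite Eb Ec => -[Ebc]; subst c.
  apply: H2 => //; rewrite Hm; apply/relcP; by exists b.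
rewrite -(card_in_imset inj).
have Hsub : h @: B \subset [set Some x | x in [set: 'I_k]].
  apply/subsetP => y /imsetP[i Hi ->]; case: (hP i Hi) => b [-> _].
  by apply/imsetP; exists b.
apply: (leq_trans (subset_leq_card Hsub)); rewrite card_imset.
  by rewrite cardsT card_ord.
by move=> x y [].
Qed.


Lemma rank_cover2 (Q I : finType) (iota : Q -> I) (P : pred Q) (a m : {set Q * Q}) :
  (forall p c c2 q, P c -> P c2 -> (p, c) \in a -> iota c = iota c2 -> (c2, q) \in m -> (p, q) \in m) ->
  (forall p q, (p, q) \in m -> exists c, [/\ P c, (p, c) \in a & (c, q) \in m]) ->
  rank m <= #|iota @: [set c | P c]|.
Proof.
move=> H1 H2.
pose u := [set x : Q * I | [exists c, [&& P c, iota c == x.2 & (x.1, c) \in a]]].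
pose v := [set x : I * Q | [exists c, [&& P c, iota c == x.1 & (c, x.2) \in m]]].
suff -> : m = relc u v.
  apply: rank_cover => p i; rewrite inE /= => /existsP[c /and3P[Pc /eqP <- _]].
  by apply/imsetP; exists c; rewrite ?inE.
apply/setP => [[p q]]; apply/idP/relcP.
  move=> /H2[c [Pc Hpc Hcq]]; exists (iota c); rewrite !inE /=; split.
    by apply/existsP; exists c; rewrite Pc eqxx Hpc.
  by apply/existsP; exists c; rewrite Pc eqxx Hcq.
move=> [i []]; rewrite !inE /= => /existsP[c /and3P[Pc /eqP Ec Hpc]] /existsP[c2 /and3P[Pc2 /eqP Ec2 Hcq]].
by apply: (H1 p c c2 q) => //; rewrite Ec Ec2.
Qed.

Lemma pigeon (T : finType) (f : nat -> T) : exists i j, i < j /\ f i = f j.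
Proof.
pose g (i : 'I_#|T|.+1) := f i.
have : ~~ injectiveb g.
  apply/negP => /injectiveP Hi; have := leq_card _ Hi.
  by rewrite card_ord ltnn.
move/injectivePn => [i [j Hij Hf]].
case: (ltngtP i j) => H.
- by exists i, j.
- by exists j, i.
- by move/val_inj: H => H; rewrite H eqxx in Hij.
Qed.

Section Idem.
Variable Q : finType.
Variable e : {set Q * Q}.
Hypothesis He : relc e e = e.

Lemma etr a b c : (a, b) \in e -> (b, c) \in e -> (a, c) \in e.
Proof. by move=> H1 H2; rewrite -He; apply/relcP; exists b. Qed.

Lemma esplit a c : (a, c) \in e -> exists b, (a, b) \in e /\ (b, c) \in e.
Proof. by rewrite -{1}He => /relcP. Qed.

Lemma efactor p q : (p, q) \in e ->
  exists c, [/\ c \in fixpts e, (p, c) \in e & (c, q) \in e].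
Proof.
move=> Hpq.
pose X := [set x | ((p, x) \in e) && ((x, q) \in e)].
have predX : forall x, x \in X -> exists y, y \in X /\ (y, x) \in e.
  move=> x; rewrite inE => /andP[H1 H2]; case: (esplit H1) => y [Hy1 Hy2].
  exists y; rewrite inE Hy1 /=; split => //; exact: etr Hy2 H2.
pose g x := odflt x [pick y in X | (y, x) \in e].
have gP : forall x, x \in X -> g x \in X /\ (g x, x) \in e.
  move=> x Hx; rewrite /g; case: pickP => [y /andP[H1 H2] | Hn] //=.
  by case: (predX x Hx) => y [H1 H2]; move: (Hn y); rewrite H1 H2.
case: (esplit Hpq) => x0 [H01 H02].
have Hx0 : x0 \in X by rewrite inE H01 H02.
have itX : forall n, iter n g x0 \in X.
  by elim=> [|n IH] //=; case: (gP _ IH).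
have itE : forall n k, (iter (k.+1 + n) g x0, iter n g x0) \in e.
  move=> n; elim=> [|k IH].
    by rewrite add1n /=; case: (gP _ (itX n)).
  rewrite addSn /=; case: (gP _ (itX (k.+1 + n))) => _ H; exact: etr H IH.
case: (pigeon (fun n => iter n g x0)) => i [j [Hij Hf]].
exists (iter i g x0); move: (itX i); rewrite inE => /andP[H1 H2]; split => //.
rewrite inE; have := itE i (j - i).-1.
have -> : (j - i).-1.+1 + i = j by lia.
by rewrite -Hf.
Qed.

Lemma conn_fix p q : p \in fixpts e ->
  connect (resrel e) p q = (q \in fixpts e) && ((p, q) \in e).
Proof.
move=> Hp; apply/idP/idP.
  move/connectP => [s Hs ->]; elim: s p Hp Hs => [|x s IH] p Hp /=.
    by rewrite Hp; move: Hp; rewrite inE.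
  move=> /andP[/and3P[_ Hx Hpx] Hs]; have /andP[H1 H2] := IH x Hx Hs.
  by rewrite H1 (etr Hpx H2).
move=> /andP[Hq Hpq]; apply: connect1; by rewrite /resrel Hp Hq Hpq.
Qed.

Lemma mem_scc p q : p \in fixpts e ->
  (q \in scc e p) = [&& q \in fixpts e, (p, q) \in e & (q, p) \in e].
Proof.
move=> Hp; rewrite inE; case Hq: (q \in fixpts e) => //=.
by rewrite conn_fix // conn_fix // Hq Hp.
Qed.

Lemma scc_self p : p \in fixpts e -> p \in scc e p.
Proof. by move=> Hp; rewrite mem_scc // Hp; move: Hp; rewrite inE => ->. Qed.

Lemma scc_eq c d : c \in fixpts e -> d \in fixpts e -> (c, d) \in e -> (d, c) \in e ->
  scc e c = scc e d.
Proof.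
move=> Hc Hd H1 H2; apply/setP => x; rewrite !mem_scc //.
case Hx: (x \in fixpts e) => //=; apply/andP/andP => -[A B]; split.
- exact: etr H2 A.
- exact: etr B H1.
- exact: etr H1 A.
- exact: etr B H2.
Qed.

Lemma scc_eqE c d : c \in fixpts e -> d \in fixpts e -> scc e c = scc e d ->
  (c, d) \in e /\ (d, c) \in e.
Proof.
move=> Hc Hd E; have := scc_self Hd; rewrite -E mem_scc // => /and3P[_ A B]; by [].
Qed.


Lemma GammaP C : reflect (exists2 c, c \in fixpts e & C = scc e c) (C \in Gamma e).
Proof. exact: imsetP. Qed.

Lemma repP (p0 : Q) C : C \in Gamma e ->
  let x := odflt p0 [pick x in C] in x \in fixpts e /\ C = scc e x.
Proof.
move=> /GammaP[c Hc ->] /=; case: pickP => [x Hx | Hn] /=.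
  move: (Hx); rewrite mem_scc // => /and3P[Hxf H1 H2]; split => //.
  exact: scc_eq.
by move: (Hn c); rewrite scc_self.
Qed.

Lemma fixpts_set : [set c | c \in fixpts e] = fixpts e.
Proof. by apply/setP => x; rewrite inE. Qed.

Lemma rank_idem : rank e = #|Gamma e|.
Proof.
apply/eqP; rewrite eqn_leq; apply/andP; split.
  have := @rank_cover2 Q _ (scc e) (fun c => c \in fixpts e) e e.
  rewrite fixpts_set; apply.
    move=> p c c2 q Hc Hc2 Hpc E Hcq; case: (scc_eqE Hc Hc2 E) => H1 _.
    exact: etr (etr Hpc H1) Hcq.
  move=> p q /efactor[c [H1 H2 H3]]; by exists c.
case: (pickP (fun q => q \in fixpts e)) => [p0 Hp0 | Hn]; last first.
  suff -> : Gamma e = set0 by rewrite cards0.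
  apply/setP => C; rewrite in_set0; apply/GammaP => -[c Hc _]; by move: (Hn c); rewrite Hc.
apply: (@rank_fool _ _ e (Gamma e) (fun C => odflt p0 [pick x in C]) (fun C => odflt p0 [pick x in C])).
  move=> C /(repP p0) [Hx _]; by move: Hx; rewrite inE.
move=> C D HC HD H1 H2; case: (repP p0 HC) => Hx ->; case: (repP p0 HD) => Hy ->.
exact: scc_eq.
Qed.

End Idem.


Lemma bigmin_leq (T : eqType) (s : seq T) (P : pred T) (F : T -> nat) x i :
  i \in s -> P i -> \big[minn/x]_(j <- s | P j) F j <= F i.
Proof.
elim: s => [|a s IH] //; rewrite in_cons => /orP[/eqP <- Pi|Hi Pi]; rewrite big_cons.
  by rewrite Pi geq_minl.
case: (P a); last exact: IH.
exact: leq_trans (geq_minr _ _) (IH Hi Pi).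
Qed.

Lemma bigmin_all (T : eqType) (s : seq T) (P : pred T) (F : T -> nat) x :
  (forall j, j \in s -> P j -> x < F j) -> \big[minn/x]_(j <- s | P j) F j = x.
Proof.
elim: s => [|a s IH] H; first by rewrite big_nil.
have H' : forall j, j \in s -> P j -> x < F j.
  by move=> j Hj; apply: H; rewrite in_cons Hj orbT.
rewrite big_cons; case Pa: (P a); rewrite IH //.
by apply/minn_idPr; apply: ltnW; apply: H => //; rewrite in_cons eqxx.
Qed.

Lemma bigmin_ex (T : eqType) (s : seq T) (P : pred T) (F : T -> nat) x :
  (exists j, [/\ j \in s, P j & F j <= x]) ->
  exists j, [/\ j \in s, P j & \big[minn/x]_(j <- s | P j) F j = F j].
Proof.
elim: s => [|a s IH] [j [Hj Pj Fj]] //; rewrite big_cons.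
case: (boolP (has (fun k => P k && (F k <= x)) s)).
  move/hasP => [k Hk /andP[Pk Fk]].
  case: IH; first by exists k.
  move=> j' [Hj' Pj' E]; rewrite E.
  case Pa: (P a); last by exists j'; rewrite in_cons Hj' orbT.
  case: (leqP (F a) (F j')) => Hle.
    by exists a; rewrite in_cons eqxx; split => //; apply/minn_idPl.
  by exists j'; rewrite in_cons Hj' orbT; split => //; apply/minn_idPr; apply: ltnW.
move=> /hasPn Hn; rewrite bigmin_all; last first.
  by move=> j' Hj' Pj'; move: (Hn j' Hj'); rewrite Pj' /= ltnNge.
move: Hj; rewrite in_cons => /orP[/eqP Ej|Hj]; last by move: (Hn j Hj); rewrite Pj Fj.
subst j; rewrite Pj; exists a; rewrite in_cons eqxx; split => //; exact/minn_idPl.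
Qed.


Section Trans.
Variables (T T' : finType) (S : {set T}) (theta : T -> T').
Hypothesis Hth : {in S &, injective theta}.

Definition alpha (g : {set T * T}) : {set T' * T'} := [set (theta x.1, theta x.2) | x in g].
Definition subS (g : {set T * T}) := forall x, x \in g -> x.1 \in S /\ x.2 \in S.

Lemma alpha_mem g s t : subS g -> s \in S -> t \in S -> ((theta s, theta t) \in alpha g) = ((s, t) \in g).
Proof.
move=> Hg Hs Ht; apply/imsetP/idP; last by move=> H; exists (s, t).
move=> [[s' t'] H /= [E1 E2]]; case: (Hg _ H) => /= Hs' Ht'.
by rewrite (Hth Hs Hs' E1) (Hth Ht Ht' E2).
Qed.

Lemma alpha_mul g h : subS g -> subS h -> alpha (relc g h) = relc (alpha g) (alpha h).
Proof.
move=> Hg Hh; apply/setP => -[X Y]; apply/imsetP/relcP.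
  move=> [[s t] /relcP[z [H1 H2]] /= [-> ->]]; exists (theta z); split.
    by apply/imsetP; exists (s, z).
  by apply/imsetP; exists (z, t).
move=> [Z [/imsetP[[s z] H1 /= [-> ->]] /imsetP[[z' t] H2 /= [Ez ->]]]].
case: (Hg _ H1) => /= _ Hz; case: (Hh _ H2) => /= Hz' _.
exists (s, t) => //; apply/relcP; exists z; split => //; by rewrite (Hth Hz Hz' Ez).
Qed.

Lemma alpha_inj g h : subS g -> subS h -> alpha g = alpha h -> g = h.
Proof.
move=> Hg Hh E; apply/setP => -[s t]; apply/idP/idP => H.
  case: (Hg _ H) => /= Hs Ht; by rewrite -(alpha_mem Hh Hs Ht) -E alpha_mem.
case: (Hh _ H) => /= Hs Ht; by rewrite -(alpha_mem Hg Hs Ht) E alpha_mem.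
Qed.

Lemma alpha_sub g : subS g -> forall x, x \in alpha g -> x.1 \in theta @: S /\ x.2 \in theta @: S.
Proof.
move=> Hg x /imsetP[y Hy ->]; case: (Hg _ Hy) => H1 H2; split; apply/imsetP; by [exists y.1 | exists y.2].
Qed.
End Trans.

Section Mon.
Variable Q : finType.
Variable M : {set {set Q * Q}}.
Hypothesis HQ : 0 < #|Q|.
Hypothesis HM : is_rel_monoid M.
Hypothesis HT : transitive_relmon M.

Lemma M1 : idrel Q \in M. Proof. by case: HM. Qed.
Lemma Mmul m n : m \in M -> n \in M -> relc m n \in M. Proof. by case: HM => _; apply. Qed.
Lemma Mpw m k : m \in M -> pw m k \in M.
Proof. move=> Hm; elim: k => [|k IH]; [exact: M1 | rewrite pwS; exact: Mmul]. Qed.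

Lemma idrel_n0 : idrel Q != set0.
Proof.
case/card_gt0P: HQ => q _; apply/set0Pn; exists (q, q); by rewrite inE.
Qed.

Lemma rank_idrel : rank (idrel Q) <= #|Q|.
Proof.
rewrite -{1}(relcm1 (idrel Q)) -cardsT; apply: rank_cover => p i _; by rewrite inE.
Qed.

Lemma minrank_le m : m \in M -> m != set0 -> minrank M <= rank m.
Proof.
move=> Hm Hn; rewrite /minrank; apply: bigmin_leq; by [rewrite mem_index_enum | rewrite Hm Hn].
Qed.

Lemma minrank_ex : exists m, [/\ m \in M, m != set0 & rank m = minrank M].
Proof.
rewrite /minrank; case: (@bigmin_ex _ (index_enum _) (fun m => (m \in M) && (m != set0)) (@rank Q) #|Q|).
  exists (idrel Q); rewrite mem_index_enum M1 idrel_n0; split => //; exact: rank_idrel.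
move=> m [_ /andP[H1 H2] E]; by exists m.
Qed.

Lemma minrank_pos : 0 < minrank M.
Proof.
case: minrank_ex => m [_ Hn <-]; rewrite lt0n; apply/negP => /eqP /rank0 E.
by rewrite E eqxx in Hn.
Qed.

Lemma inK n : (n \in Kset M) = (n \in M) && (rank n == minrank M).
Proof. by rewrite inE. Qed.

Lemma K_n0 (n : {set Q * Q}) : rank n = minrank M -> n != set0.
Proof.
move=> E; apply/negP => /eqP En; have := minrank_pos; rewrite -E En.
suff -> : @rank Q set0 = 0 by [].
apply/eqP; rewrite -leqn0; apply: rank_min; apply/existsP; exists set0; apply/existsP; exists set0.
apply/eqP/setP => x; rewrite in_set0; case: x => a b; apply/esym/relcP => -[i []]; by rewrite in_set0.
Qed.

Lemma rank_ge m : m \in M -> m != set0 -> minrank M <= rank m.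
Proof. exact: minrank_le. Qed.

Lemma n0P (m : {set Q * Q}) p q : (p, q) \in m -> m != set0.
Proof. by move=> H; apply/set0Pn; exists (p, q). Qed.

Section IdemK.
Variable e : {set Q * Q}.
Hypothesis He : relc e e = e.
Hypothesis eM : e \in M.
Hypothesis eK : rank e = minrank M.

Lemma Gamma_card : #|Gamma e| = minrank M.
Proof. by rewrite -eK rank_idem. Qed.

Lemma leftE (m : {set Q * Q}) : relc e (relc e m) = relc e m.
Proof. by rewrite -relcA He. Qed.
Lemma rightE (m : {set Q * Q}) : relc (relc m e) e = relc m e.
Proof. by rewrite relcA He. Qed.

Lemma F1 c d : c \in fixpts e -> d \in fixpts e -> (c, d) \in e -> (d, c) \in e.
Proof.
move=> Hc Hd Hcd; apply/negPn/negP => Hdc.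
have Hsc : scc e d != scc e c.
  by apply/negP => /eqP E; case: (scc_eqE He Hd Hc E) => H _; rewrite H in Hdc.
case: (HT d c) => x xM Hx.
set y := relc e (relc x e).
have yM : y \in M by apply: Mmul => //; apply: Mmul.
have ly : relc e y = y by rewrite /y leftE.
have ry : relc y e = y by rewrite /y relcA rightE.
have Hcc : forall c', c' \in fixpts e -> (c', c') \in e by move=> c'; rewrite inE.
have ydc : (d, c) \in y.
  apply/relcP; exists d; split; first exact: Hcc.
  apply/relcP; exists c; split => //; exact: Hcc.
have ycc : (c, c) \in y by rewrite -ly; apply/relcP; exists d.
have ycd : (c, d) \in y by rewrite -ry; apply/relcP; exists c.
case: (pw_idem y) => k k0 Hz; set z := pw y k in Hz.
have zM : z \in M by exact: Mpw.
have pcc : forall j, (c, c) \in pw y j.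
  elim=> [|j IH]; first by rewrite inE.
  rewrite pwS; apply/relcP; by exists c.
have zdc : (d, c) \in z.
  rewrite /z; case: k k0 {Hz z zM} => // k _; rewrite pwS; apply/relcP; by exists c.
have zcd : (c, d) \in z.
  rewrite /z; case: k k0 {Hz z zM zdc} => // k _; rewrite pwSr; apply/relcP; by exists c.
have lz : relc e z = z.
  rewrite /z; case: k k0 {Hz z zM zdc zcd} => // k _; by rewrite pwS -relcA ly.
have rz : relc z e = z.
  rewrite /z; case: k k0 {Hz z zM zdc zcd lz} => // k _; by rewrite pwSr relcA ry.
have ezeP : forall a b c' d', (a, b) \in e -> (b, c') \in z -> (c', d') \in e -> (a, d') \in z.
  move=> a b c' d' H1 H2 H3; rewrite -lz; apply/relcP; exists b; split => //.
  rewrite -rz; apply/relcP; by exists c'.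
have rge := rank_ge zM (n0P zdc).
set h := fun C : {set Q} => if C == scc e d then scc e c else C.
have : rank z <= #|(h \o scc e) @: [set c' | c' \in fixpts e]|.
  apply: (@rank_cover2 _ _ (h \o scc e) (fun c' => c' \in fixpts e) e z).
    move=> p c1 c2 q Hc1 Hc2 Hpc1 E Hc2q; rewrite -lz; apply/relcP; exists c1; split => //.
    have key : (c1, c2) \in e \/ (c1, c2) \in z.
      case: (boolP (scc e c1 == scc e c2)) => [/eqP E12|N12].
        by left; case: (scc_eqE He Hc1 Hc2 E12).
      right; move: E; rewrite /h /=.
      case: ifP => /eqP E1; case: ifP => /eqP E2.
      - by rewrite E1 E2 eqxx in N12.
      - move=> E3; case: (scc_eqE He Hc1 Hd E1) => H1 _; case: (scc_eqE He Hc Hc2 E3) => H3 _.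
        exact: ezeP H1 zdc H3.
      - move=> E3; case: (scc_eqE He Hc1 Hc E3) => H1 _; case: (scc_eqE He Hd Hc2 (esym E2)) => H3 _.
        exact: ezeP H1 zcd H3.
      - by move=> E3; rewrite E3 eqxx in N12.
    case: key => key.
      by rewrite -lz; apply/relcP; exists c2.
    by rewrite -Hz; apply/relcP; exists c2.
  move=> p q Hpq; move: Hpq; rewrite -{1}lz => /relcP[a [Hpa Haq]].
  case: (efactor He Hpa) => c1 [Hc1 H1 H2]; exists c1; split => //.
  by rewrite -lz; apply/relcP; exists a.
rewrite imset_comp.
have : #|h @: Gamma e| < #|Gamma e|.
  rewrite ltn_neqAle leq_imset_card andbT; apply/negP => /imset_injP Hinj.
  have : scc e d = scc e c.
    apply: Hinj; [apply/GammaP; by exists d | apply/GammaP; by exists c |].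
    by rewrite /h eqxx; case: ifP.
  by move=> E; rewrite E eqxx in Hsc.
rewrite fixpts_set -/(Gamma e) Gamma_card => H1 H2.
have := leq_trans rge H2; rewrite leqNgt; by rewrite H1.
Qed.
End IdemK.

Section Bi.
Variables e f a b : {set Q * Q}.
Hypothesis He : relc e e = e.
Hypothesis eK : rank e = minrank M.
Hypothesis eM : e \in M.
Hypothesis fM : f \in M.
Hypothesis Hf : relc f f = f.
Hypothesis fK : rank f = minrank M.
Hypothesis Hea : relc e a = a.
Hypothesis Haf : relc a f = a.
Hypothesis Hfb : relc f b = b.
Hypothesis Hbe : relc b e = b.
Hypothesis Hab : relc a b = e.
Hypothesis Hba : relc b a = f.

Lemma Lab c d : c \in fixpts e -> d \in fixpts f -> (c, d) \in a -> (d, c) \in b.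
Proof.
move=> Hc Hd Hcd.
have : (d, d) \in relc b a by rewrite Hba; move: Hd; rewrite inE.
move=> /relcP[z [Hdz Hzd]]; move: Hzd; rewrite -Hea => /relcP[w [Hzw Hwd]].
case: (efactor He Hzw) => c1 [Hc1 H1 H2].
have Hdc1 : (d, c1) \in b by rewrite -Hbe; apply/relcP; exists z.
have Hcc1 : (c, c1) \in e by rewrite -Hab; apply/relcP; exists d.
have := F1 He eM eK Hc Hc1 Hcc1 => Hc1c.
by rewrite -Hbe; apply/relcP; exists c1.
Qed.

Lemma a_out c : (c, c) \in e -> exists2 d, d \in fixpts f & (c, d) \in a.
Proof.
move=> Hc; move: Hc; rewrite -Hab => /relcP[z [Hcz _]].
move: Hcz; rewrite -{1}Haf => /relcP[w [Hcw Hwz]].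
case: (efactor Hf Hwz) => d [Hd H1 H2]; exists d => //.
by rewrite -Haf; apply/relcP; exists w.
Qed.

Lemma a_uniq c d d' : c \in fixpts e -> d \in fixpts f -> d' \in fixpts f ->
  (c, d) \in a -> (c, d') \in a -> (d, d') \in f.
Proof.
move=> Hc Hd Hd' H1 H2; rewrite -Hba; apply/relcP; exists c; split => //; exact: Lab.
Qed.

Lemma a_cl c c' d d' : (c', c) \in e -> (c, d) \in a -> (d, d') \in f -> (c', d') \in a.
Proof.
move=> H1 H2 H3; rewrite -Hea; apply/relcP; exists c; split => //.
by rewrite -Haf; apply/relcP; exists d.
Qed.

End Bi.

Lemma sub_card_eq (T : finType) (A B : {set T}) x :
  A \subset B -> #|B| <= #|A| -> x \in B -> x \in A.
Proof. by move=> H1 H2; have /eqP -> : A == B by rewrite eqEcard H1 H2. Qed.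

Section IdemK2.
Variable e : {set Q * Q}.
Hypothesis He : relc e e = e.
Hypothesis eM : e \in M.
Hypothesis eK : rank e = minrank M.

Lemma fix_e c : c \in fixpts e -> (c, c) \in e.
Proof. by rewrite inE. Qed.

Lemma outK m : m \in M -> m != set0 -> relc e m = m ->
  forall d, d \in fixpts e -> exists d' q, (d, d') \in e /\ (d', q) \in m.
Proof.
move=> mM mn lm d Hd.
set P := fun c => (c \in fixpts e) && [exists q, (c, q) \in m].
have Hr : rank m <= #|scc e @: [set c | P c]|.
  apply: (@rank_cover2 _ _ (scc e) P e m).
    move=> p c1 c2 q /andP[Hc1 _] /andP[Hc2 _] Hpc1 E Hq.
    case: (scc_eqE He Hc1 Hc2 E) => H _.
    rewrite -lm; apply/relcP; exists c1; split => //; rewrite -lm; apply/relcP; by exists c2.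
  move=> p q Hpq; move: Hpq; rewrite -{1}lm => /relcP[z [Hpz Hzq]].
  case: (efactor He Hpz) => c [Hc H1 H2]; exists c; split => //.
    by rewrite /P Hc; apply/existsP; exists q; rewrite -lm; apply/relcP; exists z.
  by rewrite -lm; apply/relcP; exists z.
have sub : scc e @: [set c | P c] \subset Gamma e.
  apply/subsetP => X /imsetP[c]; rewrite inE => /andP[Hc _] ->; apply/imsetP; by exists c.
have Hd' : scc e d \in Gamma e by apply/imsetP; exists d.
have := sub_card_eq sub _ Hd'; rewrite Gamma_card // => /(_ (leq_trans (rank_ge mM mn) Hr)).
move=> /imsetP[c]; rewrite inE => /andP[Hc /existsP[q Hq]] E.
exists c, q; split => //; by case: (scc_eqE He Hd Hc E).
Qed.

Lemma prod_n0 (m n : {set Q * Q}) : m != set0 -> relc m e = m -> n \in M -> n != set0 -> relc e n = n ->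
  relc m n != set0.
Proof.
move=> mn rm nM nn ln; case/set0Pn: mn => [[p q]] Hpq.
move: Hpq; rewrite -{1}rm => /relcP[z [Hpz Hzq]].
case: (efactor He Hzq) => d [Hd H1 H2].
case: (outK nM nn ln Hd) => d' [q' [H3 H4]].
apply: (@n0P _ p q'); rewrite -ln -relcA; apply/relcP; exists d'; split => //.
apply/relcP; exists z; split => //; exact (etr He H1 H3).
Qed.

Lemma F3 f : f \in M -> relc f f = f -> f != set0 -> relc e f = f -> relc f e = f -> f = e.
Proof.
move=> fM Hf fn lf rf.
have fK : rank f = minrank M.
  apply/eqP; rewrite eqn_leq rank_ge // andbT -eK; have := rank_relc_l e f; by rewrite lf.
have eff : relc e (relc f e) = f by rewrite rf lf.
case/card_gt0P: HQ => p0 _.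
have touch : forall c0, c0 \in fixpts e ->
    exists c, [/\ c \in fixpts e, (c0, c) \in e, (c, c0) \in e & (c, c) \in f].
  set P := fun c => (c \in fixpts e) && ((c, c) \in f).
  have Hr : rank f <= #|scc e @: [set c | P c]|.
    apply: (@rank_cover2 _ _ (scc e) P f f).
      move=> p c1 c2 q /andP[Hc1 _] /andP[Hc2 _] Hpc1 E Hq.
      case: (scc_eqE He Hc1 Hc2 E) => H _.
      rewrite -Hf; apply/relcP; exists c1; split => //; rewrite -lf; apply/relcP; by exists c2.
    move=> p q Hpq; case: (efactor Hf Hpq) => d [Hd Hpd Hdq].
    have : (d, d) \in relc e (relc f e) by rewrite eff; move: Hd; rewrite inE.
    move=> /relcP[z [Hdz Hzd]]; case: (efactor He Hdz) => c [Hc Hdc Hcz].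
    have Hcd : (c, d) \in f by rewrite -eff; apply/relcP; exists z.
    exists c; split.
    - by rewrite /P Hc -rf; apply/relcP; exists d.
    - by rewrite -rf; apply/relcP; exists d.
    - by rewrite -Hf; apply/relcP; exists d.
  have sub : scc e @: [set c | P c] \subset Gamma e.
    apply/subsetP => X /imsetP[c]; rewrite inE => /andP[Hc _] ->; apply/imsetP; by exists c.
  move=> c0 Hc0.
  have Hd' : scc e c0 \in Gamma e by apply/imsetP; exists c0.
  have := sub_card_eq sub _ Hd'; rewrite Gamma_card // => /(_ (leq_trans (rank_ge fM fn) Hr)).
  move=> /imsetP[c]; rewrite inE => /andP[Hc Hcc] E.
  case: (scc_eqE He Hc0 Hc E) => H1 H2; by exists c.
have ef : forall x, x \in e -> x \in f.
  move=> [p q] Hpq; case: (efactor He Hpq) => c0 [Hc0 H1 H2].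
  case: (touch c0 Hc0) => c [Hc H3 H4 H5].
  rewrite -eff; apply/relcP; exists c; split; first exact (etr He H1 H3).
  apply/relcP; exists c; split => //; exact (etr He H4 H2).
have FeFf : forall c, c \in fixpts e -> c \in fixpts f.
  by move=> c; rewrite !inE; apply: ef.
pose k (C : {set Q}) := scc f (odflt p0 [pick x in C]).
have kE : forall c, c \in fixpts e -> k (scc e c) = scc f c.
  move=> c Hc; have HG : scc e c \in Gamma e by apply/imsetP; exists c.
  case: (repP He p0 HG) => Hx E; rewrite /k.
  case: (scc_eqE He Hc Hx E) => H1 H2.
  by apply: scc_eq => //; [apply: FeFf | apply: FeFf | apply: ef | apply: ef].
have GfE : Gamma f = k @: Gamma e.
  apply/setP => X; apply/imsetP/imsetP.
    move=> [d Hd ->].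
    have : (d, d) \in relc e (relc f e) by rewrite eff; move: Hd; rewrite inE.
    move=> /relcP[z [Hdz Hzd]]; case: (efactor He Hdz) => c [Hc Hdc Hcz].
    have Hcd : (c, d) \in f by rewrite -eff; apply/relcP; exists z.
    exists (scc e c); first by apply/imsetP; exists c.
    rewrite kE //; apply: scc_eq => //; [exact: FeFf | exact: ef].
  move=> [C /imsetP[c Hc ->] ->]; exists c; [exact: FeFf | exact: kE].
have kinj : {in Gamma e &, injective k}.
  apply/imset_injP; rewrite -GfE Gamma_card // Gamma_card //.
have fe : forall x, x \in f -> x \in e.
  move=> [p q]; rewrite -eff => /relcP[a0 [Hpa /relcP[b0 [Hab Hbq]]]].
  case: (efactor He Hpa) => c [Hc H1 H2]; case: (efactor He Hbq) => c' [Hc' H3 H4].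
  have Hcc' : (c, c') \in f.
    rewrite -eff; apply/relcP; exists a0; split => //; apply/relcP; by exists b0.
  have Hc'c := F1 Hf fM fK (FeFf _ Hc) (FeFf _ Hc') Hcc'.
  have E : scc f c = scc f c' by apply: scc_eq => //; exact: FeFf.
  have : scc e c = scc e c'.
    apply: kinj; [apply/imsetP; by exists c | apply/imsetP; by exists c' | by rewrite !kE].
  move=> /(scc_eqE He Hc Hc') [H5 _].
  exact (etr He (etr He H1 H5) H4).
by apply/setP => x; apply/idP/idP; [apply: fe | apply: ef].
Qed.

Lemma group_inv m : m \in M -> relc e m = m -> relc m e = m -> m != set0 ->
  exists n, [/\ n \in M, relc e n = n, relc n e = n, relc m n = e & relc n m = e].
Proof.
move=> mM lm rm mn.
case: (pw_idem m) => k k0 Hk.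
have pkM : pw m k \in M by exact: Mpw.
have lk : forall j, relc e (pw m j.+1) = pw m j.+1 by move=> j; rewrite pwS -relcA lm.
have rk : forall j, relc (pw m j.+1) e = pw m j.+1 by move=> j; rewrite pwSr relcA rm.
have nk : forall j, pw m j.+1 != set0.
  elim=> [|j IH]; first by rewrite pwS relcm1.
  by rewrite pwS; apply: prod_n0 => //; (exact: Mpw || exact: lk).
have Ek : pw m k = e.
  case: k k0 Hk pkM => // j _ Hk pkM; apply: F3 => //; (exact: nk || exact: lk || exact: rk).
exists (relc e (relc (pw m k.-1) e)); split.
- by apply: Mmul => //; apply: Mmul => //; exact: Mpw.
- by rewrite leftE.
- by rewrite relcA rightE.
- rewrite -relcA rm -relcA; case: k k0 Hk Ek {pkM} => // j _ _ Ek /=; by rewrite -pwS Ek He.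
- rewrite !relcA lm; case: k k0 Hk Ek {pkM} => // j _ _ Ek /=; by rewrite -pwSr Ek He.
Qed.

Lemma HclassP m : reflect [/\ m \in M, relc e m = m, relc m e = m & m != set0] (m \in Hclass M e).
Proof.
apply: (iffP idP).
  rewrite inE => /and3P[mM /existsP[a /andP[aM /existsP[b /andP[bM /andP[/eqP E1 /eqP E2]]]]]
                         /existsP[a' /andP[a'M /existsP[b' /andP[b'M /andP[/eqP E3 /eqP E4]]]]]].
  split => //.
  - by rewrite E1 leftE.
  - by rewrite E3 rightE.
  - apply/negP => /eqP m0; have := K_n0 eK; rewrite E2 m0.
    suff -> : relc set0 b = set0 :> {set Q * Q} by rewrite eqxx.
    by apply/setP => -[x y]; rewrite in_set0; apply/relcP => -[z []]; rewrite in_set0.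
move=> [mM lm rm mn]; case: (group_inv mM lm rm mn) => n [nM ln rn mnE nmE].
rewrite inE mM /=; apply/andP; split.
  apply/existsP; exists m; rewrite mM /=; apply/existsP; exists n; by rewrite nM lm mnE !eqxx.
apply/existsP; exists m; rewrite mM /=; apply/existsP; exists n; by rewrite nM rm nmE !eqxx.
Qed.

End IdemK2.

Lemma relc0l (m : {set Q * Q}) : relc (set0 : {set Q * Q}) m = set0.
Proof. by apply/setP => -[x y]; rewrite in_set0; apply/relcP => -[z []]; rewrite in_set0. Qed.

Section IdemK3.
Variable e : {set Q * Q}.
Hypothesis He : relc e e = e.
Hypothesis eM : e \in M.
Hypothesis eK : rank e = minrank M.

Notation H := (Hclass M e).

Lemma e_n0 : e != set0. Proof. exact: K_n0 eK. Qed.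

Lemma eH : e \in H.
Proof. apply/(HclassP He eM eK); split => //; exact: e_n0. Qed.

Lemma hinvP m : m \in H ->
  [/\ hinv M e m \in H, relc m (hinv M e m) = e & relc (hinv M e m) m = e].
Proof.
move=> Hm; rewrite /hinv; case: pickP => [n /andP[Hn /andP[/eqP E1 /eqP E2]] | Hnone] //=.
case/(HclassP He eM eK): (Hm) => mM lm rm mn.
case: (group_inv He eM eK mM lm rm mn) => n [nM ln rn E1 E2].
have Hn : n \in H.
  apply/(HclassP He eM eK); split => //; apply/negP => /eqP n0.
  by move: e_n0; rewrite -E2 n0 relc0l eqxx.
by move: (Hnone n); rewrite Hn E1 E2 !eqxx.
Qed.

Lemma Hmul m n : m \in H -> n \in H -> relc m n \in H.
Proof.
move=> /(HclassP He eM eK)[mM lm rm mn] /(HclassP He eM eK)[nM ln rn nn].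
apply/(HclassP He eM eK); split.
- exact: Mmul.
- by rewrite -relcA lm.
- by rewrite relcA rn.
- exact (prod_n0 He eK mn rm nM nn ln).
Qed.

Lemma HLab m c d : m \in H -> c \in fixpts e -> d \in fixpts e -> (c, d) \in m ->
  (d, c) \in hinv M e m.
Proof.
move=> Hm Hc Hd Hcd; case: (hinvP Hm) => Hn E1 E2.
case/(HclassP He eM eK): (Hm) => mM lm rm mn; case/(HclassP He eM eK): (Hn) => nM ln rn nn.
exact: (Lab He eK eM lm rn E1 E2 Hc Hd Hcd).
Qed.

Lemma HLba m c d : m \in H -> c \in fixpts e -> d \in fixpts e -> (d, c) \in hinv M e m ->
  (c, d) \in m.
Proof.
move=> Hm Hc Hd Hcd; case: (hinvP Hm) => Hn E1 E2.
case/(HclassP He eM eK): (Hm) => mM lm rm mn; case/(HclassP He eM eK): (Hn) => nM ln rn nn.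
exact: (Lab He eK eM ln rm E2 E1 Hd Hc Hcd).
Qed.

Lemma H_out m c : m \in H -> c \in fixpts e -> exists2 d, d \in fixpts e & (c, d) \in m.
Proof.
move=> Hm Hc; case: (hinvP Hm) => Hn E1 E2.
case/(HclassP He eM eK): (Hm) => mM lm rm mn; case/(HclassP He eM eK): (Hn) => nM ln rn nn.
exact: (a_out He rm E1 (fix_e Hc)).
Qed.

Lemma H_props m : m \in H -> [/\ m \in M, relc e m = m, relc m e = m & m != set0].
Proof. by move/(HclassP He eM eK). Qed.

Lemma H_cl m c c' d d' : m \in H -> (c', c) \in e -> (c, d) \in m -> (d, d') \in e -> (c', d') \in m.
Proof. by move=> /H_props[_ lm rm _]; exact: a_cl. Qed.

Lemma H_uniq m c d d' : m \in H -> c \in fixpts e -> d \in fixpts e -> d' \in fixpts e ->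
  (c, d) \in m -> (c, d') \in m -> (d, d') \in e.
Proof.
move=> Hm Hc Hd Hd' H1 H2; case: (hinvP Hm) => Hn E1 E2.
rewrite -E2; apply/relcP; exists c; split => //; exact: HLab.
Qed.

Lemma gamma_sub m x : x \in gamma M e m -> x.1 \in Gamma e /\ x.2 \in Gamma e.
Proof. by rewrite inE => /and3P[]. Qed.

Lemma gammaE m c d : m \in H -> c \in fixpts e -> d \in fixpts e ->
  ((scc e c, scc e d) \in gamma M e m) = ((c, d) \in m).
Proof.
move=> Hm Hc Hd; rewrite inE /=; apply/idP/idP.
  move=> /and3P[_ _ /existsP[r /andP[Hr /existsP[s /andP[Hs /andP[Hrs _]]]]]].
  move: Hr Hs; rewrite !mem_scc // => /and3P[_ H1 _] /and3P[_ _ H2].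
  exact: H_cl Hm H1 Hrs H2.
move=> Hcd; apply/and3P; split; [apply/imsetP; by exists c | apply/imsetP; by exists d |].
apply/existsP; exists c; rewrite scc_self //=; apply/existsP; exists d; rewrite scc_self //= Hcd /=.
exact: HLab.
Qed.

Lemma perm_relH m : m \in H -> is_perm_rel (Gamma e) (gamma M e m).
Proof.
move=> Hm; split.
- by move=> x /gamma_sub.
- move=> s /GammaP[c Hc ->]; case: (H_out Hm Hc) => d Hd Hcd.
  exists (scc e d); split; first by rewrite gammaE.
  move=> t Ht; case: (gamma_sub Ht) => _ /= /GammaP[d' Hd' Et]; subst t.
  move: Ht; rewrite gammaE // => Hcd'.
  apply: scc_eq => //; [exact: H_uniq Hm Hc Hd Hd' Hcd Hcd' | exact: H_uniq Hm Hc Hd' Hd Hcd' Hcd].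
- move=> t /GammaP[d Hd ->]; case: (hinvP Hm) => Hn _ _.
  case: (H_out Hn Hd) => c Hc Hdc; have Hcd := HLba Hm Hc Hd Hdc.
  exists (scc e c); split; first by rewrite gammaE.
  move=> s Hs; case: (gamma_sub Hs) => /= /GammaP[c' Hc' Es] _; subst s.
  move: Hs; rewrite gammaE // => Hc'd; have Hdc' := HLab Hm Hc' Hd Hc'd.
  apply: scc_eq => //; [exact: H_uniq Hn Hd Hc Hc' Hdc Hdc' | exact: H_uniq Hn Hd Hc' Hc Hdc' Hdc].
Qed.

Lemma gamma_mul m m' : m \in H -> m' \in H ->
  relc (gamma M e m) (gamma M e m') = gamma M e (relc m m').
Proof.
move=> Hm Hm'; have Hmm := Hmul Hm Hm'.
apply/setP => -[X Y].
case: (boolP (X \in Gamma e)) => HX; last first.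
  apply/idP/idP.
    by move=> /relcP[Z [/gamma_sub [/= H1 _] _]]; rewrite H1 in HX.
  by move=> /gamma_sub [/= H1 _]; rewrite H1 in HX.
case: (boolP (Y \in Gamma e)) => HY; last first.
  apply/idP/idP.
    by move=> /relcP[Z [_ /gamma_sub [_ /= H1]]]; rewrite H1 in HY.
  by move=> /gamma_sub [_ /= H1]; rewrite H1 in HY.
case/GammaP: HX => c Hc ->; case/GammaP: HY => d Hd ->.
rewrite gammaE //; apply/relcP/idP.
  move=> [Z [H1 H2]]; case: (gamma_sub H1) => _ /= /GammaP[z Hz Ez]; subst Z.
  move: H1 H2; rewrite !gammaE // => H1 H2; apply/relcP; by exists z.
move=> Hcd; case: (H_out Hm Hc) => z Hz Hcz; exists (scc e z); rewrite !gammaE //; split => //.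
case: (hinvP Hm) => Hn E1 E2; have Hzc := HLab Hm Hc Hz Hcz.
case: (H_props Hm') => _ lm' _ _.
rewrite -lm' -E2 relcA; apply/relcP; by exists c.
Qed.

Lemma gamma_id : gamma M e e = [set x | (x.1 \in Gamma e) && (x.1 == x.2)].
Proof.
apply/setP => -[X Y]; rewrite [in RHS]inE /=.
case: (boolP (X \in Gamma e)) => HX /=; last first.
  by apply/negP => /gamma_sub [/= H1 _]; rewrite H1 in HX.
case: (boolP (Y \in Gamma e)) => HY; last first.
  apply/idP/idP; first by move=> /gamma_sub [_ /= H1]; rewrite H1 in HY.
  by move=> /eqP E; rewrite -E HX in HY.
case/GammaP: HX => c Hc ->; case/GammaP: HY => d Hd ->.
rewrite gammaE //; [|exact: eH]; apply/idP/eqP.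
  move=> Hcd; apply: scc_eq => //; exact (F1 He eM eK Hc Hd Hcd).
by move/(scc_eqE He Hc Hd) => [].
Qed.

Lemma group_part : perm_group (Gamma e) (Gset M e) /\ transitive_pgroup (Gamma e) (Gset M e).
Proof.
split.
  split.
  - by move=> g /imsetP[m Hm ->]; exact: perm_relH.
  - by rewrite -gamma_id; apply/imsetP; exists e => //; exact: eH.
  - move=> g h /imsetP[m Hm ->] /imsetP[m' Hm' ->]; rewrite gamma_mul //.
    apply/imsetP; exists (relc m m') => //; exact: Hmul.
move=> s t /GammaP[c Hc ->] /GammaP[d Hd ->].
case: (HT c d) => x xM Hx.
have Hm : relc e (relc x e) \in H.
  apply/(HclassP He eM eK); split.
  - by apply: Mmul => //; apply: Mmul.
  - by rewrite leftE.
  - by rewrite relcA rightE.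
  - apply: (@n0P _ c d); apply/relcP; exists c; split; first exact: fix_e.
    apply/relcP; exists d; split => //; exact: fix_e.
exists (gamma M e (relc e (relc x e))); first by apply/imsetP; exists (relc e (relc x e)).
rewrite gammaE //; apply/relcP; exists c; split; first exact: fix_e.
apply/relcP; exists d; split => //; exact: fix_e.
Qed.

Lemma inGamma C c0 : C \in Gamma e -> c0 \in C -> c0 \in fixpts e /\ C = scc e c0.
Proof.
move=> /GammaP[z Hz ->]; rewrite mem_scc // => /and3P[Hc0 H1 H2]; split => //.
exact: scc_eq.
Qed.

Lemma DL n : n \in M -> rank n = minrank M ->
  exists x y, [/\ x \in M, y \in M, relc (relc e x) (relc n (relc y e)) \in H &
   relc (relc n (relc y e)) (relc (hinv M e (relc (relc e x) (relc n (relc y e)))) (relc (relc e x) n)) = n].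
Proof.
move=> nM nK.
case/set0Pn: (K_n0 nK) => [[p q]] Hpq.
have [c Hc] : exists c, c \in fixpts e.
  case/set0Pn: (e_n0) => [[a b]] Hab; case: (efactor He Hab) => c [Hc _ _]; by exists c.
case: (HT c p) => x xM Hx; case: (HT q c) => y yM Hy.
exists x, y.
set ex := relc e x; set ye := relc y e; set t := relc ex (relc n ye).
have tpath : forall c0 p0 q0 c', (c0, p0) \in ex -> (p0, q0) \in n -> (q0, c') \in ye -> (c0, c') \in t.
  move=> c0 p0 q0 c' H1 H2 H3; apply/relcP; exists p0; split => //; apply/relcP; by exists q0.
have tH : t \in H.
  apply/(HclassP He eM eK); split.
  - by apply: Mmul; [apply: Mmul | apply: Mmul => //; apply: Mmul].
  - by rewrite /t /ex -relcA leftE.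
  - by rewrite /t /ye !relcA He.
  - apply: (@n0P _ c c); apply: (tpath c p q c) => //.
      by apply/relcP; exists c; split => //; exact: fix_e.
    by apply/relcP; exists c; split => //; exact: fix_e.
split => //.
set ti := hinv M e t; case: (hinvP tH) => tiH E1 E2.
have [k [u [v [En Ek]]]] : exists k (u : {set Q * 'I_k}) (v : {set 'I_k * Q}), n = relc u v /\ k = minrank M.
  move: (rank_wit n) => /existsP[u /existsP[v /eqP E]]; by exists (rank n), u, v.
pose P (C : {set Q}) (i : 'I_k) := [exists c0, [exists c', [exists p0, [exists q0,
   [&& c0 \in C, c' \in fixpts e, (c0, p0) \in ex & [&& (p0, i) \in u, (i, q0) \in v & (q0, c') \in ye]]]]]].
have PP : forall C i, P C i -> exists c0 c' p0 q0,
    [/\ c0 \in C, c' \in fixpts e, (c0, p0) \in ex, (p0, i) \in u & (i, q0) \in v /\ (q0, c') \in ye].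
  move=> C i /existsP[c0 /existsP[c' /existsP[p0 /existsP[q0 /and4P[H1 H2 H3 /and3P[H4 H5 H6]]]]]].
  by exists c0, c', p0, q0.
have same : forall C C' c0 c1 c', C \in Gamma e -> C' \in Gamma e -> c0 \in C -> c1 \in C' ->
    c' \in fixpts e -> (c0, c') \in t -> (c1, c') \in t -> C = C'.
  move=> C C' c0 c1 c' HC HC' H0 H1 Hc' T0 T1.
  case: (inGamma HC H0) => F0 ->; case: (inGamma HC' H1) => F1' ->.
  have A0 := HLab tH F0 Hc' T0; have A1 := HLab tH F1' Hc' T1.
  apply: scc_eq => //; [exact: H_uniq tiH Hc' F0 F1' A0 A1 | exact: H_uniq tiH Hc' F1' F0 A1 A0].
have hit : forall C, C \in Gamma e -> exists i, P C i.
  move=> C HC; case/GammaP: (HC) => c1 Hc1 EC.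
  case: (H_out tH Hc1) => d Hd.
  move=> /relcP[p0 [Hp0 /relcP[q0 [Hpq0 Hq0]]]].
  move: Hpq0; rewrite En => /relcP[i [Hi1 Hi2]]; exists i.
  apply/existsP; exists c1; apply/existsP; exists d; apply/existsP; exists p0; apply/existsP; exists q0.
  by rewrite EC scc_self // Hd Hp0 Hi1 Hi2 Hq0.
pose iC C := [pick i | P C i].
have iCP : forall C, C \in Gamma e -> exists i, iC C = Some i /\ P C i.
  move=> C HC; rewrite /iC; case: pickP => [i Hi | Hn]; first by exists i.
  by case: (hit C HC) => i; rewrite Hn.
have iCinj : {in Gamma e &, injective iC}.
  move=> C C' HC HC'; case: (iCP C HC) => i [-> HP]; case: (iCP C' HC') => j [-> HP'] [Eij].
  subst j; case: (PP _ _ HP) => c0 [c' [p0 [q0 [H0 Hc' Hx0 Hu0 [Hv0 Hy0]]]]].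
  case: (PP _ _ HP') => c1 [c1' [p1 [q1 [H1 Hc1' Hx1 Hu1 [Hv1 Hy1]]]]].
  apply: (same C C' c0 c1 c1') => //.
    by apply: (tpath c0 p0 q1) => //; rewrite En; apply/relcP; exists i.
  by apply: (tpath c1 p1 q1) => //; rewrite En; apply/relcP; exists i.
have hitall : forall i, exists C, [/\ C \in Gamma e, iC C = Some i & P C i].
  move=> i.
  have sub : iC @: Gamma e \subset Some @: [set: 'I_k].
    apply/subsetP => o /imsetP[C HC ->]; case: (iCP C HC) => j [-> _]; by apply/imsetP; exists j.
  have Hcard : #|Some @: [set: 'I_k]| <= #|iC @: Gamma e|.
    rewrite (card_in_imset iCinj) Gamma_card // card_imset; last by move=> a b [].
    by rewrite cardsT card_ord Ek.
  have : Some i \in iC @: Gamma e by apply: (sub_card_eq sub Hcard); apply/imsetP; exists i.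
  move=> /imsetP[C HC EC]; exists C; case: (iCP C HC) => j [E HP]; rewrite E in EC *.
  by case: EC => ->.
have lt : relc e t = t by case/(HclassP He eM eK): tH.
have inn : forall a b i, (a, i) \in u -> (i, b) \in v -> (a, b) \in n.
  by move=> a b i H1 H2; rewrite En; apply/relcP; exists i.
apply/setP => -[a b]; apply/idP/idP.
  move=> /relcP[z1 [/relcP[a' [Haa' Ha'z1]] /relcP[z2 [Hz12 /relcP[b' [Hz2b' Hb'b]]]]]].
  move: Haa' Hb'b; rewrite En => /relcP[i [Hai Hia']] /relcP[j [Hb'j Hjb]].
  case: (hitall i) => C [HC EC HP]; case: (PP _ _ HP) => c0 [c' [p0 [q0 [H0 Hc' Hx0 Hu0 [Hv0 Hy0]]]]].
  case: (hitall j) => C' [HC' EC' HP']; case: (PP _ _ HP') => c1 [c1' [p1 [q1 [H1 Hc1' Hx1 Hu1 [Hv1 Hy1]]]]].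
  have T0 : (c0, z1) \in t by apply: (tpath c0 p0 a') => //; exact: inn Hu0 Hia'.
  have T1 : (z2, c1') \in t by apply: (tpath z2 b' q1) => //; exact: inn Hb'j Hv1.
  have T01 : (c0, c1') \in t.
    rewrite -lt -E1 relcA; apply/relcP; exists z1; split => //; apply/relcP; by exists z2.
  have T11 : (c1, c1') \in t by apply: (tpath c1 p1 q1) => //; exact: inn Hu1 Hv1.
  have ECC := same C C' c0 c1 c1' HC HC' H0 H1 Hc1' T01 T11.
  move: EC'; rewrite -ECC EC => -[Eij]; subst j.
  by apply/relcP; exists i.
rewrite {1}En => /relcP[i [Hai Hib]].
case: (hitall i) => C [HC EC HP]; case: (PP _ _ HP) => c0 [c' [p0 [q0 [H0 Hc' Hx0 Hu0 [Hv0 Hy0]]]]].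
case: (inGamma HC H0) => F0 _.
have T : (c0, c') \in t by apply: (tpath c0 p0 q0) => //; exact: inn Hu0 Hv0.
have Ti := HLab tH F0 Hc' T.
apply/relcP; exists c'; split.
  apply/relcP; exists q0; split => //; exact: inn Hai Hv0.
apply/relcP; exists c0; split => //; apply/relcP; exists p0; split => //; exact: inn Hu0 Hib.
Qed.


Lemma KD : Kset M = [set n in M | Drel M e n].
Proof.
apply/setP => n; rewrite !inE; case nM: (n \in M) => //=; apply/idP/idP.
  move/eqP => nK; case: (DL nM nK) => x [y [xM yM tH Heq]].
  case: (hinvP tH) => tiH E1 E2; case: (H_props tiH) => tiM _ _ _.
  apply/existsP; exists (relc n (relc y e)).
  have pM : relc n (relc y e) \in M by apply: Mmul => //; exact: Mmul.
  rewrite pM /=; apply/andP; split.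
    apply/existsP; exists (relc (hinv M e (relc (relc e x) (relc n (relc y e)))) (relc e x)).
    rewrite Mmul //=; last exact: Mmul.
    apply/existsP; exists (relc n y); rewrite Mmul //=.
    by rewrite relcA E2 eqxx relcA eqxx.
  apply/existsP; exists (relc y e); rewrite Mmul //=.
  apply/existsP; exists (relc (hinv M e (relc (relc e x) (relc n (relc y e)))) (relc (relc e x) n)).
  rewrite Mmul //=; last by apply: Mmul => //; exact: Mmul.
  by rewrite eqxx Heq eqxx.
move=> /existsP[p /andP[pM /andP[HL HR]]].
move: HL => /existsP[a /andP[aM /existsP[b /andP[bM /andP[/eqP E1 /eqP E2]]]]].
move: HR => /existsP[a' /andP[a'M /existsP[b' /andP[b'M /andP[/eqP E3 /eqP E4]]]]].
have R1 : rank e <= rank p by rewrite {1}E1; exact: rank_relc_r.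
have R2 : rank p <= rank e by rewrite E2; exact: rank_relc_r.
have R3 : rank p <= rank n by rewrite E3; exact: rank_relc_l.
have R4 : rank n <= rank p by rewrite E4; exact: rank_relc_l.
rewrite -eK; apply/eqP; apply/eqP; rewrite eqn_leq; apply/andP; split.
  exact: leq_trans R4 R2.
exact: leq_trans R1 R3.
Qed.


Lemma exe_H x c d : x \in M -> (c, d) \in x -> c \in fixpts e -> d \in fixpts e ->
  relc e (relc x e) \in H /\ (c, d) \in relc e (relc x e).
Proof.
move=> xM Hx Hc Hd.
have Hcd : (c, d) \in relc e (relc x e).
  apply/relcP; exists c; split; first exact: fix_e.
  apply/relcP; exists d; split => //; exact: fix_e.
split => //; apply/(HclassP He eM eK); split.
- by apply: Mmul => //; apply: Mmul.
- by rewrite leftE.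
- by rewrite relcA rightE.
- exact: n0P Hcd.
Qed.

Lemma in_ex m d : m \in H -> d \in fixpts e -> exists2 c, c \in fixpts e & (c, d) \in m.
Proof.
move=> Hm Hd; case: (hinvP Hm) => Hn _ _; case: (H_out Hn Hd) => c Hc Hdc.
exists c => //; exact: HLba Hm Hc Hd Hdc.
Qed.

Lemma H_inuniq m c c' d : m \in H -> c \in fixpts e -> c' \in fixpts e -> d \in fixpts e ->
  (c, d) \in m -> (c', d) \in m -> (c, c') \in e.
Proof.
move=> Hm Hc Hc' Hd H1 H2; case: (hinvP Hm) => Hn _ _.
exact: H_uniq Hn Hd Hc Hc' (HLab Hm Hc Hd H1) (HLab Hm Hc' Hd H2).
Qed.

Lemma H_insame m c c' d : m \in H -> c \in fixpts e -> c' \in fixpts e -> d \in fixpts e ->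
  (c, d) \in m -> (c', d) \in m -> scc e c = scc e c'.
Proof.
move=> Hm Hc Hc' Hd H1 H2; apply: scc_eq => //; [exact: H_inuniq Hm Hc Hc' Hd H1 H2 | exact: H_inuniq Hm Hc' Hc Hd H2 H1].
Qed.

Definition psi (i : Q) (m : {set Q * Q}) :=
  scc e (odflt i [pick c | (c \in fixpts e) && ((c, i) \in m)]).

Lemma psiE i m c : i \in fixpts e -> m \in H -> c \in fixpts e -> (c, i) \in m -> psi i m = scc e c.
Proof.
move=> Hi Hm Hc Hci; rewrite /psi; case: pickP => [c' /andP[Hc' Hc'i] | Hn] /=; last first.
  by move: (Hn c); rewrite Hc Hci.
exact: H_insame Hm Hc' Hc Hi Hc'i Hci.
Qed.

Lemma coset_eq i m m' : i \in fixpts e -> m \in H -> m' \in H ->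
  let S := [set s in H | (i, i) \in s] in
  ([set relc m s | s in S] == [set relc m' s | s in S]) = (psi i m == psi i m').
Proof.
move=> Hi Hm Hm' S.
case: (in_ex Hm Hi) => c Hc Hci; case: (in_ex Hm' Hi) => c' Hc' Hc'i.
rewrite (psiE Hi Hm Hc Hci) (psiE Hi Hm' Hc' Hc'i).
have eS : e \in S by rewrite inE eH // fix_e.
apply/eqP/eqP.
  move=> E; have : m' \in [set relc m s | s in S].
    by rewrite E; apply/imsetP; exists e => //; case: (H_props Hm') => _ _ ->.
  move=> /imsetP[s]; rewrite inE => /andP[Hs Hsi] Em'.
  have : (c, i) \in m' by rewrite Em'; apply/relcP; exists i.
  move=> Hci'; exact: H_insame Hm' Hc Hc' Hi Hci' Hc'i.
move=> E; case: (hinvP Hm) => Hn E1 E2.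
have Hci' : (c, i) \in m'.
  case: (scc_eqE He Hc Hc' E) => H1 _; exact: H_cl Hm' H1 Hc'i (fix_e Hi).
set s := relc (hinv M e m) m'.
have sH : s \in H by apply: Hmul.
have sS : s \in S.
  rewrite inE sH /=; apply/relcP; exists c; split => //; exact: HLab Hm Hc Hi Hci.
have Ems : relc m s = m'.
  by rewrite /s -relcA E1; case: (H_props Hm') => _ -> _ _.
case: (hinvP sH) => siH F1' F2'.
have siS : hinv M e s \in S.
  by rewrite inE siH /=; apply: (HLab sH Hi Hi); move: sS; rewrite inE => /andP[_ ->].
apply/eqP; rewrite eqEsubset; apply/andP; split; apply/subsetP => z /imsetP[s' Hs' ->].
  have Hs'H : s' \in H by move: Hs'; rewrite inE => /andP[].
  apply/imsetP; exists (relc (hinv M e s) s').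
    rewrite inE Hmul //=; apply/relcP; exists i; split; first by move: siS; rewrite inE => /andP[_ ->].
    by move: Hs'; rewrite inE => /andP[_ ->].
  rewrite -Ems relcA -(relcA s) F1'; by case: (H_props Hs'H) => _ -> _ _.
have Hs'H : s' \in H by move: Hs'; rewrite inE => /andP[].
apply/imsetP; exists (relc s s').
  rewrite inE Hmul //=; apply/relcP; exists i; split; first by move: sS; rewrite inE => /andP[_ ->].
  by move: Hs'; rewrite inE => /andP[_ ->].
by rewrite -Ems relcA.
Qed.


Lemma card_kernel (A B1 B2 : finType) (D : {set A}) (f1 : A -> B1) (f2 : A -> B2) :
  {in D &, forall x y, (f1 x == f1 y) = (f2 x == f2 y)} -> #|f1 @: D| = #|f2 @: D|.
Proof.
move=> Hk; pose g x := (f1 x, f2 x).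
have E1 : f1 @: D = fst @: (g @: D) by rewrite -imset_comp; apply: eq_imset.
have E2 : f2 @: D = snd @: (g @: D) by rewrite -imset_comp; apply: eq_imset.
have C1 : #|fst @: (g @: D)| = #|g @: D|.
  apply: card_in_imset => a b /imsetP[x Hx ->] /imsetP[y Hy ->] /= E; rewrite /g E.
  by have := Hk x y Hx Hy; rewrite E eqxx => /esym/eqP ->.
have C2 : #|snd @: (g @: D)| = #|g @: D|.
  apply: card_in_imset => a b /imsetP[x Hx ->] /imsetP[y Hy ->] /= E; rewrite /g E.
  by have := Hk x y Hx Hy; rewrite E eqxx => /eqP ->.
by rewrite E1 E2 C1 C2.
Qed.

Lemma index_thm i : i \in fixpts e -> minrank M = index_in H [set m in H | (i, i) \in m].
Proof.
move=> Hi; rewrite /index_in -(Gamma_card He eK) (@card_kernel _ _ _ H _ (psi i)); last first.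
  by move=> m m' Hm Hm'; exact: (coset_eq Hi Hm Hm').
apply: eq_card => C; apply/idP/imsetP.
  move=> /GammaP[c Hc ->]; case: (HT c i) => x xM Hx.
  case: (exe_H xM Hx Hc Hi) => Hm Hci; exists (relc e (relc x e)) => //.
  by rewrite (psiE Hi Hm Hc Hci).
move=> [m Hm ->]; case: (in_ex Hm Hi) => c Hc Hci; rewrite (psiE Hi Hm Hc Hci).
by apply/GammaP; exists c.
Qed.

End IdemK3.

Lemma idem_ex : exists e, [/\ e \in M, relc e e = e & rank e = minrank M].
Proof.
case: minrank_ex => m [mM mn mK]; case/set0Pn: mn => [[p q]] Hpq.
case: (HT q p) => x xM Hx.
set y := relc m x.
have Hy : (p, p) \in y by apply/relcP; exists q.
case: (pw_idem y) => k k0 Hk.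
have pp : forall j, (p, p) \in pw y j.
  elim=> [|j IH]; first by rewrite inE.
  rewrite pwS; apply/relcP; by exists p.
exists (pw y k); split => //; first by apply: Mpw; exact: Mmul.
apply/eqP; rewrite eqn_leq; apply/andP; split.
  case: k k0 Hk => // j _ _; rewrite pwS /y relcA -mK; exact: rank_relc_l.
apply: rank_ge; [by apply: Mpw; exact: Mmul | exact: n0P (pp k)].
Qed.

Lemma regular : regular_Dclass M (Kset M).
Proof.
case: idem_ex => e [eM He eK]; split.
  by exists e => //; exact: KD.
by exists e; [rewrite inK eM eK eqxx | apply/eqP].
Qed.


Section Equiv.
Variables e f : {set Q * Q}.
Hypothesis He : relc e e = e.
Hypothesis eM : e \in M.
Hypothesis eK : rank e = minrank M.
Hypothesis Hf : relc f f = f.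
Hypothesis fM : f \in M.
Hypothesis fK : rank f = minrank M.

Lemma equiv_thm : equiv_pgroups (Gamma e) (Gset M e) (Gamma f) (Gset M f).
Proof.
case/card_gt0P: HQ => p0 _.
case: (DL He eM eK fM fK) => x [y [xM yM tH Heq]].
case: (hinvP He eM eK tH) => tiH E1 E2.
move: (hinv M e (relc (relc e x) (relc f (relc y e)))) tiH E1 E2 Heq => ti tiH E1 E2 Heq.
case: (H_props He eM eK tiH) => tiM lti rti _.
set a := relc (relc e x) f.
set b := relc f (relc (relc y e) ti).
have aM : a \in M by apply: Mmul => //; apply: Mmul.
have bM : b \in M by apply: Mmul => //; apply: Mmul => //; apply: Mmul.
have Hea : relc e a = a by rewrite /a -relcA (leftE He).
have Haf : relc a f = a by rewrite /a relcA Hf.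
have Hfb : relc f b = b by rewrite /b -relcA Hf.
have Hbe : relc b e = b by rewrite /b !relcA rti.
have Hab : relc a b = e.
  by rewrite -E1 /a /b !relcA -[relc f (relc f _)]relcA Hf.
have Hba : relc b a = f by rewrite -Heq /a /b !relcA.
clearbody a b.
have LabE := Lab He eK eM Hea Hbe Hab Hba.
have LbaE := Lab Hf fK fM Hfb Haf Hba Hab.
have aout := a_out Hf Haf Hab.
have bout := a_out He Hbe Hba.
have auniq := a_uniq He eK eM Hea Hbe Hab Hba.
have buniq := a_uniq Hf fK fM Hfb Haf Hba Hab.
have acl := a_cl Hea Haf.
pose theta (C : {set Q}) :=
  scc f (odflt p0 [pick d | (d \in fixpts f) && ((odflt p0 [pick z in C], d) \in a)]).
have thE : forall c d, c \in fixpts e -> d \in fixpts f -> (c, d) \in a -> theta (scc e c) = scc f d.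
  move=> c d Hc Hd Hcd.
  have HG : scc e c \in Gamma e by apply/imsetP; exists c.
  case: (repP He p0 HG) => Hx0 E0; case: (scc_eqE He Hc Hx0 E0) => _ Hx0c.
  have Hx0d := acl _ _ _ _ Hx0c Hcd (fix_e Hd).
  rewrite /theta; case: pickP => [d' /andP[Hd' Hx0d'] | Hn] /=; last by move: (Hn d); rewrite Hd Hx0d.
  apply: scc_eq => //; [exact: auniq Hx0 Hd' Hd Hx0d' Hx0d | exact: auniq Hx0 Hd Hd' Hx0d Hx0d'].
have thimg : theta @: Gamma e = Gamma f.
  apply/setP => X; apply/imsetP/GammaP.
    move=> [C /GammaP[c Hc ->] ->]; case: (aout _ (fix_e Hc)) => d Hd Hcd.
    by exists d => //; exact: (thE _ _ Hc Hd Hcd).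
  move=> [d Hd ->]; case: (bout _ (fix_e Hd)) => c Hc Hdc.
  exists (scc e c); first by apply/imsetP; exists c.
  exact: (esym (thE _ _ Hc Hd (LbaE _ _ Hd Hc Hdc))).
have thinj : {in Gamma e &, injective theta}.
  move=> C C' /GammaP[c Hc ->] /GammaP[c' Hc' ->].
  case: (aout _ (fix_e Hc)) => d Hd Hcd; case: (aout _ (fix_e Hc')) => d' Hd' Hcd'.
  rewrite (thE _ _ Hc Hd Hcd) (thE _ _ Hc' Hd' Hcd') => E.
  case: (scc_eqE Hf Hd Hd' E) => H1 _.
  have Hdc := LabE _ _ Hc Hd Hcd; have Hd'c' := LabE _ _ Hc' Hd' Hcd'.
  have Hdc' : (d, c') \in b by rewrite -Hfb; apply/relcP; exists d'.
  apply: scc_eq => //; [exact: buniq Hd Hc Hc' Hdc Hdc' |].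
  have Hd'c : (d', c) \in b.
    case: (scc_eqE Hf Hd Hd' E) => _ H2; rewrite -Hfb; apply/relcP; by exists d.
  exact: buniq Hd' Hc' Hc Hd'c' Hd'c.
have transfer : forall m, m \in Hclass M e -> relc b (relc m a) \in Hclass M f.
  move=> m Hm; case: (H_props He eM eK Hm) => mM lm rm _.
  case: (hinvP He eM eK Hm) => nH mn nm; case: (H_props He eM eK nH) => nM _ _ _.
  apply/(HclassP Hf fM fK); split.
  - by apply: Mmul => //; apply: Mmul.
  - by rewrite -relcA Hfb.
  - by rewrite !relcA Haf.
  - apply/negP => /eqP E0.
    have : relc (relc b (relc m a)) (relc b (relc (hinv M e m) a)) = f.
      rewrite !relcA -[relc a (relc b _)]relcA Hab -[relc m (relc e _)]relcA rm.
      by rewrite -[relc m (relc _ a)]relcA mn Hea Hba.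
    rewrite E0 relc0l => E; have := K_n0 fK; by rewrite -E eqxx.
have back : forall n, n \in Hclass M f -> relc a (relc n b) \in Hclass M e.
  move=> n Hn; case: (H_props Hf fM fK Hn) => nM ln rn _.
  case: (hinvP Hf fM fK Hn) => mH nm mn; case: (H_props Hf fM fK mH) => mM _ _ _.
  apply/(HclassP He eM eK); split.
  - by apply: Mmul => //; apply: Mmul.
  - by rewrite -relcA Hea.
  - by rewrite !relcA Hbe.
  - apply/negP => /eqP E0.
    have : relc (relc a (relc n b)) (relc a (relc (hinv M f n) b)) = e.
      rewrite !relcA -[relc b (relc a _)]relcA Hba -[relc n (relc f _)]relcA rn.
      by rewrite -[relc n (relc _ b)]relcA nm Hfb Hab.
    rewrite E0 relc0l => E; have := K_n0 eK; by rewrite -E eqxx.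
have round : forall n, n \in Hclass M f -> relc b (relc (relc a (relc n b)) a) = n.
  move=> n Hn; case: (H_props Hf fM fK Hn) => nM ln rn _.
  by rewrite !relcA Hba rn -relcA Hba ln.
have subG : forall m, subS (Gamma e) (gamma M e m) by move=> m z /gamma_sub.
have agamma : forall m, m \in Hclass M e ->
    alpha theta (gamma M e m) = gamma M f (relc b (relc m a)).
  move=> m Hm; have Hm' := transfer m Hm.
  case: (H_props He eM eK Hm) => _ lm rm _.
  apply/setP => -[X Y].
  case: (boolP ((X \in Gamma f) && (Y \in Gamma f))) => [/andP[HX HY]|HXY]; last first.
    apply/idP/idP.
      move/(alpha_sub (subG m)); rewrite thimg => -[/= H1 H2]; by rewrite H1 H2 in HXY.
    by move=> /gamma_sub [/= H1 H2]; rewrite H1 H2 in HXY.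
  case/GammaP: HX => d Hd ->; case/GammaP: HY => d' Hd' ->.
  case: (bout _ (fix_e Hd)) => c Hc Hdc; have Hcd := LbaE _ _ Hd Hc Hdc.
  case: (bout _ (fix_e Hd')) => c' Hc' Hdc'; have Hcd' := LbaE _ _ Hd' Hc' Hdc'.
  rewrite (gammaE Hf fM fK Hm' Hd Hd') -(thE _ _ Hc Hd Hcd) -(thE _ _ Hc' Hd' Hcd').
  have HGc : scc e c \in Gamma e by apply/imsetP; exists c.
  have HGc' : scc e c' \in Gamma e by apply/imsetP; exists c'.
  rewrite (alpha_mem thinj (subG m) HGc HGc').
  rewrite (gammaE He eM eK Hm Hc Hc').
  apply/idP/idP => H.
    apply/relcP; exists c; split => //; apply/relcP; by exists c'.
  have : (c, c') \in relc a (relc (relc b (relc m a)) b).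
    apply/relcP; exists d; split => //; apply/relcP; by exists d'.
  by rewrite !relcA Hab -[relc a (relc b _)]relcA Hab rm lm.
exists theta, (alpha theta); split => //.
- split.
    move=> g h /imsetP[m Hm ->] /imsetP[m' Hm' ->]; exact (alpha_inj thinj (subG m) (subG m')).
  apply/setP => g'; apply/imsetP/imsetP.
    move=> [g /imsetP[m Hm ->] ->]; exists (relc b (relc m a)); first exact: transfer.
    exact: agamma.
  move=> [n Hn ->]; exists (gamma M e (relc a (relc n b))); first by apply/imsetP; exists (relc a (relc n b)) => //; exact: back.
  by rewrite agamma ?round //; exact: back.
- move=> g h /imsetP[m Hm ->] /imsetP[m' Hm' ->]; exact (alpha_mul thinj (subG m) (subG m')).
- move=> g s u /imsetP[m Hm ->] Hs Hu; by rewrite (alpha_mem thinj (subG m) Hs Hu).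
Qed.
End Equiv.

End Mon.


Theorem mainTheorem10 (Q : finType) (M : {set {set Q * Q}}) :
  0 < #|Q| -> is_rel_monoid M -> transitive_relmon M ->
  [/\ regular_Dclass M (Kset M),
      (forall e, e \in Kset M -> idem_rel e ->
         perm_group (Gamma e) (Gset M e) /\ transitive_pgroup (Gamma e) (Gset M e)),
      (forall e f, e \in Kset M -> idem_rel e -> f \in Kset M -> idem_rel f ->
         equiv_pgroups (Gamma e) (Gset M e) (Gamma f) (Gset M f))
    & (forall e i, e \in Kset M -> idem_rel e -> (i, i) \in e ->
         minrank M = index_in (Hclass M e) [set m in Hclass M e | (i, i) \in m])].
Proof.
move=> HQ HM HT; split.
- exact: (regular HQ HM HT).
- move=> e; rewrite inE => /andP[eM /eqP eK] /eqP He.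
  exact: (group_part HQ HM HT He eM eK).
- move=> e f; rewrite !inE => /andP[eM /eqP eK] /eqP He /andP[fM /eqP fK] /eqP Hf.
  exact: (equiv_thm HQ HM HT He eM eK Hf fM fK).
- move=> e i; rewrite inE => /andP[eM /eqP eK] /eqP He Hi.
  apply: (index_thm HQ HM HT He eM eK); by rewrite inE.
Qed.
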